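(* Let $d\ge 3$ be odd. Then $G_d$ is weakly regular branch over its commutator subgroup $G_d'$: $G_d$ is spherically transitive and $G_d'\times\cdots\times G_d'$ ($d$ factors) is contained in $\psi_1(G_d'\cap \mathrm{St}_{G_d}(\widehat 1))$.
   Context: Let $d\ge 3$, $X=\{1,\dots,d\}$, $T$ the $d$-regular rooted tree with vertex set $X^*$. $\mathrm{Aut}(T)$ is the group of root-preserving automorphisms with product left-to-right: $(gh)(u)=h(g(u))$. Sections $g|_u$ are defined by $g(uv)=g(u)\,g|_u(v)$; we write $g=(g|_1,\dots,g|_d)\lambda_g$ with $\lambda_g\in S_d$ the action on the first level; $e$ is the identity; $\overline{j}\in\{1,\dots,d\}$ denotes $j$ mod $d$. $G_d=\langle a_1,\dots,a_d\rangle\le\mathrm{Aut}(T)$ where $a_i$ acts on the first level as $(i\ \overline{i+1})$, with $a_i|_i=a_i$, $a_i|_{\overline{i+1}}=a_{\overline{i+1}}$, and $a_i|_x=e$ otherwise. $\mathrm{St}_{G}(\widehat 1)$ is the subgroup of elements fixing every vertex of the first level $X$, and $\psi_1:\mathrm{St}_G(\widehat1)\to G^d$, $g\mapsto (g|_1,\dots,g|_d)$ is the (injective) homomorphism. A group is spherically transitive if it acts transitively on each level $X^k$. *)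

(* Defs.v *)
(* Vertices of the d-regular rooted tree T are words over
   X = 'I_d (the letter k : 'I_d stands for the paper's letter k+1).
   Tree automorphisms are represented as functions seq 'I_d -> seq 'I_d;
   group elements are equal when they are extensionally equal. *)
From mathcomp Require Import all_boot.
Set Implicit Arguments. Unset Strict Implicit. Unset Printing Implicit Defensive.

Definition vertex (d : nat) := seq 'I_d.

(* Action of the generator a_i (inv = false) or of its inverse a_i^-1
   (inv = true) on a vertex.  a_i swaps i and i+1 (mod d) on the first level,
   with sections a_i|_i = a_i, a_i|_(i+1) = a_(i+1), e elsewhere:
     a_i (i w)     = (i+1) a_i(w),
     a_i ((i+1) w) = i a_(i+1)(w),
     a_i (x w)     = x w            otherwise.                            *)
Fixpoint gen_act (d : nat) (inv : bool) (i : 'I_d) (w : vertex d) : vertex d :=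
  match w with
  | [::] => [::]
  | x :: w' =>
      if ~~ inv then
        if x == i then ordS i :: gen_act inv i w'
        else if x == ordS i then i :: gen_act inv (ordS i) w'
        else x :: w'
      else
        if x == ordS i then i :: gen_act inv i w'
        else if x == i then ordS i :: gen_act inv (ordS i) w'
        else x :: w'
  end.

(* Words in the generators a_i^{+-1}: a letter (b, i) is a_i^-1 if b, else a_i. *)
Definition gword (d : nat) := seq (bool * 'I_d).

(* Evaluation of a word as a tree automorphism, with the paper's left-to-right
   product convention (gh)(u) = h(g(u)). *)
Definition eval_word (d : nat) (ws : gword d) (u : vertex d) : vertex d :=
  foldl (fun v l => gen_act l.1 l.2 v) u ws.

Definition winv (d : nat) (ws : gword d) : gword d :=
  rev (map (fun l => (~~ l.1, l.2)) ws).

Definition wcomm (d : nat) (a b : gword d) : gword d :=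
  winv a ++ winv b ++ a ++ b.

Definition commprod (d : nat) (cs : seq (gword d * gword d)) : gword d :=
  flatten (map (fun p => wcomm p.1 p.2) cs).

Definition in_G (d : nat) (f : vertex d -> vertex d) : Prop :=
  exists w : gword d, forall u, f u = eval_word w u.

(* f is an element of the commutator subgroup G_d' (the subgroup generated by
   all commutators [g,h], g,h in G_d; since the inverse of a commutator is a
   commutator, its elements are exactly finite products of commutators). *)
Definition in_G' (d : nat) (f : vertex d -> vertex d) : Prop :=
  exists cs : seq (gword d * gword d), forall u, f u = eval_word (commprod cs) u.

Definition in_St1 (d : nat) (f : vertex d -> vertex d) : Prop :=
  forall x : 'I_d, f [:: x] = [:: x].

(* Section f|_u, defined by f(uv) = f(u) f|_u(v). *)
Definition section (d : nat) (f : vertex d -> vertex d) (u : vertex d) :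
  vertex d -> vertex d :=
  fun v => drop (size u) (f (u ++ v)).

Definition spherically_transitive_G (d : nat) : Prop :=
  forall (k : nat) (u v : vertex d), size u = k -> size v = k ->
    exists f, in_G f /\ f u = v.

Definition G'_branching (d : nat) : Prop :=
  forall hs : 'I_d -> (vertex d -> vertex d),
    (forall x, in_G' (hs x)) ->
    exists g, in_G' g /\ in_St1 g /\
      forall (x : 'I_d) (v : vertex d), section g [:: x] v = hs x v.

(* Main.v *)
Require Import Defs.
From mathcomp Require Import all_boot.
From mathcomp Require Import zify.
Set Implicit Arguments. Unset Strict Implicit. Unset Printing Implicit Defensive.

Lemma ev_cat d (W1 W2 : gword d) u :
  eval_word (W1 ++ W2) u = eval_word W2 (eval_word W1 u).
Proof. by rewrite /eval_word foldl_cat. Qed.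

Lemma ev_cons d (l : bool * 'I_d) W u :
  eval_word (l :: W) u = eval_word W (gen_act l.1 l.2 u).
Proof. by []. Qed.

Lemma ev_cons2 d b (i : 'I_d) W u :
  eval_word ((b, i) :: W) u = eval_word W (gen_act b i u).
Proof. by []. Qed.

Lemma ev1 d b (i : 'I_d) u : eval_word [:: (b, i)] u = gen_act b i u.
Proof. by []. Qed.

Lemma ev_nil d (u : vertex d) : eval_word [::] u = u.
Proof. by []. Qed.

Lemma ordS_neq d (i : 'I_d) : 1 < d -> ordS i != i.
Proof.
move=> hd; apply/eqP=> /(congr1 val) /=.
case: (ltnP i.+1 d) => h.
  by rewrite modn_small // => /eqP; rewrite -[X in _ == X]addn0 -addn1 eqn_add2l.
have e : i.+1 = d by have := ltn_ord i; lia.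
by rewrite e modnn => e0; move: e; rewrite -e0; lia.
Qed.

Lemma gen_inv d (b : bool) (i : 'I_d) u :
  gen_act (~~ b) i (gen_act b i u) = u.
Proof.
case: b; elim: u i => [|x w IH] i //=.
- case: (eqVneq x (ordS i)) => [->|hx] /=.
    by rewrite eqxx -[in RHS](IH i).
  case: (eqVneq x i) => [e|hxi] /=.
    by subst x; rewrite eq_sym (negbTE hx) eqxx -[in RHS](IH (ordS i)).
  by rewrite (negbTE hx) (negbTE hxi).
- case: (eqVneq x i) => [->|hx] /=.
    by rewrite eqxx -[in RHS](IH i).
  case: (eqVneq x (ordS i)) => [e|hxi] /=.
    by subst x; rewrite eq_sym (negbTE hx) eqxx -[in RHS](IH (ordS i)).
  by rewrite (negbTE hx) (negbTE hxi).
Qed.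

Lemma gen_invK d (b : bool) (i : 'I_d) u :
  gen_act b i (gen_act (~~ b) i u) = u.
Proof. by have := gen_inv (~~ b) i u; rewrite negbK. Qed.

Lemma gFT d (i : 'I_d) u : gen_act false i (gen_act true i u) = u.
Proof. exact: (gen_inv true). Qed.

Lemma gTF d (i : 'I_d) u : gen_act true i (gen_act false i u) = u.
Proof. exact: (gen_inv false). Qed.

Lemma winv_cons d (l : bool * 'I_d) W :
  winv (l :: W) = winv W ++ [:: (~~ l.1, l.2)].
Proof. by rewrite /winv /= rev_cons cats1. Qed.

Lemma winv_cat d (A B : gword d) : winv (A ++ B) = winv B ++ winv A.
Proof. by rewrite /winv map_cat rev_cat. Qed.

Lemma winvK d (W : gword d) : winv (winv W) = W.
Proof.
rewrite /winv map_rev revK -map_comp map_id_in // => -[b i] _ /=.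
by rewrite negbK.
Qed.

Lemma ev_Kwinv d (W : gword d) u : eval_word (winv W) (eval_word W u) = u.
Proof.
elim: W u => [|l W IH] u //=.
by rewrite winv_cons ev_cat IH /= gen_inv.
Qed.

Lemma ev_winvK d (W : gword d) u : eval_word W (eval_word (winv W) u) = u.
Proof. by have := ev_Kwinv (winv W) u; rewrite winvK. Qed.

Lemma gen_size d b (i : 'I_d) u : size (gen_act b i u) = size u.
Proof.
case: b; elim: u i => [|x w IH] i //=;
by repeat case: ifP => _ /=; rewrite ?IH.
Qed.

Lemma ev_size d (W : gword d) u : size (eval_word W u) = size u.
Proof. by elim: W u => [|l W IH] u //=; rewrite IH gen_size. Qed.

Lemma ev_shape d (W : gword d) y u : exists y' u', eval_word W (y :: u) = y' :: u'.
Proof.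
have := ev_size W (y :: u); case: (eval_word W (y :: u)) => [|y' u'] //= _.
by exists y', u'.
Qed.

Lemma ev_nilv d (W : gword d) : eval_word W [::] = [::].
Proof. by have := ev_size W [::]; case: (eval_word W [::]). Qed.

Lemma gF_i d (i : 'I_d) w : gen_act false i (i :: w) = ordS i :: gen_act false i w.
Proof. by rewrite /= eqxx. Qed.

Lemma gF_Si d (i : 'I_d) w : 1 < d ->
  gen_act false i (ordS i :: w) = i :: gen_act false (ordS i) w.
Proof. by move=> hd; rewrite /= (negbTE (ordS_neq i hd)) eqxx. Qed.

Lemma gF_o d (i y : 'I_d) w : y != i -> y != ordS i ->
  gen_act false i (y :: w) = y :: w.
Proof. by move=> h1 h2; rewrite /= (negbTE h1) (negbTE h2). Qed.

Lemma gT_Si d (i : 'I_d) w : gen_act true i (ordS i :: w) = i :: gen_act true i w.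
Proof. by rewrite /= eqxx. Qed.

Lemma gT_i d (i : 'I_d) w : 1 < d ->
  gen_act true i (i :: w) = ordS i :: gen_act true (ordS i) w.
Proof. by move=> hd; rewrite /= eq_sym (negbTE (ordS_neq i hd)) eqxx. Qed.

Lemma gT_o d (i y : 'I_d) w : y != i -> y != ordS i ->
  gen_act true i (y :: w) = y :: w.
Proof. by move=> h1 h2; rewrite /= (negbTE h1) (negbTE h2). Qed.

Definition sh d k (x : 'I_d) := iter k (@ordS d) x.

Lemma sh_val d k (x : 'I_d) : val (sh k x) = (x + k) %% d.
Proof.
elim: k => [|k IH] /=.
  by rewrite addn0 modn_small.
by rewrite IH -addn1 modnDml addn1 addnS.
Qed.

Lemma sh_add d a b (x : 'I_d) : sh a (sh b x) = sh (a + b) x.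
Proof. by rewrite /sh iterD. Qed.

Lemma shS d k (x : 'I_d) : sh k.+1 x = sh k (ordS x).
Proof. by rewrite /sh iterSr. Qed.

Lemma sh_neq d k (x : 'I_d) : 0 < k < d -> sh k x != x.
Proof.
move=> /andP [h0 h1]; apply/eqP => /(congr1 (@nat_of_ord d)); rewrite sh_val.
have hx := ltn_ord x.
case: (ltnP (x + k) d) => h.
  by rewrite modn_small //; lia.
have -> : x + k = (x + k - d) + d by lia.
rewrite modnDr modn_small; lia.
Qed.

Lemma sh_d d (x : 'I_d) : sh d x = x.
Proof.
apply: val_inj; rewrite sh_val /= modnDr modn_small //.
Qed.

Lemma sh_surj d (x y : 'I_d) : exists k, sh k x = y.
Proof.
exists (d - x + y); apply: val_inj; rewrite sh_val.
have hx := ltn_ord x; have hy := ltn_ord y.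
have -> : x + (d - x + y) = y + d by lia.
by rewrite modnDr modn_small.
Qed.

Fixpoint pairs d (n : nat) (y : 'I_d) : gword d :=
  if n is n'.+1 then (true, y) :: (false, ordS y) :: pairs n' (ordS (ordS y))
  else [::].

Definition Aw d (x : 'I_d) : gword d := (false, x) :: pairs d./2 (ordS x).

Lemma pairs_run d n (y : 'I_d) u : 1 < d ->
  eval_word (pairs n y) (y :: u) = sh (2 * n) y :: u.
Proof.
move=> hd; elim: n y u => [|n IH] y u; first by [].
rewrite [pairs _ _]/= !ev_cons2 gT_i // gF_i gFT IH -shS -shS.
by congr (sh _ _ :: _); lia.
Qed.

Lemma pairs_fix d n (y z : 'I_d) u :
  (forall k, k <= 2 * n -> sh k y != z) ->
  eval_word (pairs n y) (z :: u) = z :: u.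
Proof.
elim: n y u => [|n IH] y u hk; first by [].
rewrite [pairs _ _]/= !ev_cons2.
have h0 := hk 0 isT; have h1 : sh 1 y != z by apply: hk; lia.
have h2 : sh 2 y != z by apply: hk; lia.
rewrite eq_sym in h0; rewrite eq_sym in h1; rewrite eq_sym in h2.
rewrite gT_o // gF_o //; apply: IH => k hk'.
rewrite -shS -shS; apply: hk; lia.
Qed.

Lemma half_odd d : odd d -> d = (2 * d./2).+1.
Proof. by move=> ho; rewrite -[LHS]odd_double_half ho add1n mul2n. Qed.

Lemma Aw_x d (x : 'I_d) u : 2 < d -> odd d ->
  eval_word (Aw x) (x :: u) = x :: gen_act false x u.
Proof.
move=> hd ho; rewrite /Aw ev_cons /= eqxx pairs_run; last lia.
by rewrite -shS -half_odd // sh_d.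
Qed.

Lemma Aw_x2 d (x : 'I_d) u : 2 < d -> odd d ->
  eval_word (Aw x) (ordS (ordS x) :: u) = ordS x :: gen_act true (ordS x) u.
Proof.
move=> hd ho; rewrite /Aw ev_cons /=.
have n2 : ordS (ordS x) != x by apply: (sh_neq (k:=2)); lia.
have n1 : ordS (ordS x) != ordS x by apply: (sh_neq (k:=1) (ordS x)); lia.
rewrite (negbTE n2) (negbTE n1).
have -> : d./2 = (d./2).-1.+1 by have := half_odd ho; lia.
rewrite /= eqxx.
have m1 : ordS x != ordS (ordS x) by rewrite eq_sym.
have m2 : ordS x != ordS (ordS (ordS x)).
  rewrite eq_sym; apply: (sh_neq (k:=2) (ordS x)); lia.
rewrite gF_o // pairs_fix // => k hk.
rewrite -shS -shS; apply: sh_neq.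
have := half_odd ho; lia.
Qed.

Lemma fix_inv d (W : gword d) (x : 'I_d) (f g : vertex d -> vertex d) :
  (forall u, eval_word W (x :: u) = x :: f u) -> (forall u, f (g u) = u) ->
  forall u, eval_word (winv W) (x :: u) = x :: g u.
Proof. by move=> H H' u; rewrite -{1}(H' u) -H ev_Kwinv. Qed.

Lemma lift_gen_k d (k : nat) (x : 'I_d) : 2 < d -> odd d ->
  exists W : gword d, forall u, eval_word W (x :: u) = x :: gen_act false (sh k x) u.
Proof.
move=> hd ho; elim: k x => [|k IH] x.
  by exists (Aw x) => u; rewrite Aw_x.
have [W' HW'] := IH (ordS x).
exists (winv (Aw x) ++ [:: (false, x)] ++ W' ++ [:: (true, x)] ++ Aw x) => u.
have Hi := fix_inv (fun u => Aw_x x u hd ho) (gFT x).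
by rewrite !ev_cat Hi !ev1 gF_i gFT HW' gT_Si Aw_x // gFT shS.
Qed.

Lemma lift_gen d (x j : 'I_d) : 2 < d -> odd d ->
  exists W : gword d, forall u, eval_word W (x :: u) = x :: gen_act false j u.
Proof.
move=> hd ho; have [k <-] := sh_surj x j; exact: lift_gen_k.
Qed.

Lemma lift d (x : 'I_d) (V : gword d) : 2 < d -> odd d ->
  exists W : gword d, forall u, eval_word W (x :: u) = x :: eval_word V u.
Proof.
move=> hd ho; elim: V => [|[b j] V [W' HW']].
  by exists [::].
have [W HW] := lift_gen x j hd ho.
case: b.
- exists (winv W ++ W') => u; rewrite ev_cat (fix_inv HW (gFT j)) HW'.
  by [].
- by exists (W ++ W') => u; rewrite ev_cat HW HW'.
Qed.

Lemma move1 d k (x : 'I_d) u :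
  exists (W : gword d) u', eval_word W (x :: u) = sh k x :: u'.
Proof.
elim: k => [|k [W [u' HW]]]; first by exists [::], u.
exists (W ++ [:: (false, sh k x)]), (gen_act false (sh k x) u').
by rewrite ev_cat HW /= eqxx.
Qed.

Lemma trans_level d (hd : 2 < d) (ho : odd d) k :
  forall u v : vertex d, size u = k -> size v = k ->
  exists W : gword d, eval_word W u = v.
Proof.
elim: k => [|k IH] [|x u] [|y v] //=.
  by move=> _ _; exists [::].
move=> [hu] [hv].
have [k' <-] := sh_surj x y.
have [W1 [u' H1]] := move1 k' x u.
have hu' : size u' = k by have := ev_size W1 (x :: u); rewrite H1 /= hu => -[].
have [W2 H2] := IH u' v hu' hv.
have [W3 H3] := lift (sh k' x) W2 hd ho.
by exists (W1 ++ W3); rewrite ev_cat H1 H3 H2.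
Qed.

Lemma sph d : 2 < d -> odd d -> spherically_transitive_G d.
Proof.
move=> hd ho k u v hu hv.
have [W HW] := trans_level hd ho hu hv.
by exists (eval_word W); split => //; exists W.
Qed.

Lemma commprod_cat d (cs1 cs2 : seq (gword d * gword d)) :
  commprod (cs1 ++ cs2) = commprod cs1 ++ commprod cs2.
Proof. by rewrite /commprod map_cat flatten_cat. Qed.

Lemma commprod_cons d (p : gword d * gword d) cs :
  commprod (p :: cs) = wcomm p.1 p.2 ++ commprod cs.
Proof. by []. Qed.

Definition Supp d (x : 'I_d) (h : vertex d -> vertex d) :=
  exists cs : seq (gword d * gword d),
    (forall u, eval_word (commprod cs) (x :: u) = x :: h u) /\
    (forall y u, y != x -> eval_word (commprod cs) (y :: u) = y :: u).

Lemma S_ext d (x : 'I_d) h h' : Supp x h -> (forall u, h u = h' u) -> Supp x h'.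
Proof. by move=> [cs [H1 H2]] e; exists cs; split => // u; rewrite H1 e. Qed.

Lemma S_id d (x : 'I_d) : Supp x id.
Proof. by exists [::]. Qed.

Lemma S_idf d (x : 'I_d) h : (forall u, h u = u) -> Supp x h.
Proof. by move=> e; apply: S_ext (S_id x) _ => u; rewrite e. Qed.

Lemma S_comp d (x : 'I_d) h1 h2 : Supp x h1 -> Supp x h2 -> Supp x (fun u => h2 (h1 u)).
Proof.
move=> [c1 [A1 B1]] [c2 [A2 B2]]; exists (c1 ++ c2).
by split => [u|y u hy]; rewrite commprod_cat ev_cat ?A1 ?A2 // B1 // B2.
Qed.

Definition cconj d (V : gword d) (cs : seq (gword d * gword d)) :=
  map (fun p => (winv V ++ p.1 ++ V, winv V ++ p.2 ++ V)) cs.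

Lemma ev_wcomm_conj d (V A B : gword d) u :
  eval_word (wcomm (winv V ++ A ++ V) (winv V ++ B ++ V)) u =
  eval_word V (eval_word (wcomm A B) (eval_word (winv V) u)).
Proof.
by rewrite /wcomm !winv_cat !winvK !ev_cat !ev_Kwinv.
Qed.

Lemma ev_cconj d (V : gword d) cs u :
  eval_word (commprod (cconj V cs)) u =
  eval_word V (eval_word (commprod cs) (eval_word (winv V) u)).
Proof.
elim: cs u => [|p cs IH] u /=; first by rewrite ev_winvK.
rewrite /commprod /= -/(commprod _) -/(commprod (cconj V cs)) ev_cat IH.
by rewrite ev_wcomm_conj ev_Kwinv ev_cat.
Qed.

Lemma S_conj d (hd : 2 < d) (ho : odd d) (x : 'I_d) h (V : gword d) :
  Supp x h -> Supp x (fun u => eval_word V (h (eval_word (winv V) u))).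
Proof.
move=> [cs [H1 H2]].
have [Vt HV] := lift x V hd ho.
have HVi := fix_inv HV (ev_winvK V).
exists (cconj Vt cs); split => [u|y u hy]; rewrite ev_cconj.
  by rewrite HVi H1 HV.
have [y' [u' E]] := ev_shape (winv Vt) y u.
have hy' : y' != x.
  apply/eqP => ey; move: (ev_winvK Vt (y :: u)); rewrite E ey HV => -[] e _.
  by rewrite e eqxx in hy.
by rewrite E H2 // -E ev_winvK.
Qed.

Definition cinv d (cs : seq (gword d * gword d)) :=
  rev (map (fun p => (p.2, p.1)) cs).

Lemma wcomm_inv d (A B : gword d) u :
  eval_word (wcomm B A) (eval_word (wcomm A B) u) = u.
Proof. by rewrite /wcomm !ev_cat !ev_Kwinv !ev_winvK. Qed.

Lemma ev_cinv d (cs : seq (gword d * gword d)) u :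
  eval_word (commprod (cinv cs)) (eval_word (commprod cs) u) = u.
Proof.
elim: cs u => [|p cs IH] u //=.
rewrite /cinv map_cons rev_cons -cats1 -/(cinv cs) commprod_cat commprod_cons.
have -> : commprod [::] = [::] :> gword d by [].
by rewrite cats0 ev_cat commprod_cons (ev_cat (wcomm _ _)) IH wcomm_inv.
Qed.

Lemma S_inv d (x : 'I_d) h g : Supp x h -> (forall u, h (g u) = u) -> Supp x g.
Proof.
move=> [cs [H1 H2]] e; exists (cinv cs); split => [u|y u hy].
  by rewrite -{1}(e u) -H1 ev_cinv.
by rewrite -{1}(H2 y u hy) ev_cinv.
Qed.

Lemma S_transS d (hd : 2 < d) (ho : odd d) (x : 'I_d) h :
  Supp (ordS x) h -> Supp x h.
Proof.
move=> [cs [H1 H2]].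
have hd1 : 1 < d by lia.
have nx := ordS_neq x hd1.
have S1 : Supp x (fun u => gen_act false (ordS x) (h (gen_act true (ordS x) u))).
  have wi : winv [:: (false, x)] = [:: (true, x)] by [].
  exists (cconj [:: (false, x)] cs); split => [u|y u hy]; rewrite ev_cconj wi !ev1.
    by rewrite gT_i // H1 gF_Si.
  case: (eqVneq y (ordS x)) => [->|hy2].
    by rewrite gT_Si H2 1?eq_sym // gF_i gFT.
  by rewrite gT_o // H2 // gF_o.
have S2 := S_conj hd ho [:: (true, ordS x)] S1.
apply: (S_ext S2) => u.
have wi : winv [:: (true, ordS x)] = [:: (false, ordS x)] by [].
by rewrite wi !ev1 !gTF.
Qed.

Lemma S_trans d (hd : 2 < d) (ho : odd d) (x y : 'I_d) h : Supp y h -> Supp x h.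
Proof.
have [k <-] := sh_surj x y.
elim: k x => [|k IH] x //.
by rewrite shS => /IH; apply: S_transS.
Qed.

Lemma core d (hd : 2 < d) (ho : odd d) (x : 'I_d) :
  Supp x (eval_word (wcomm [:: (false, ordS x)] [:: (false, x)])).
Proof.
have hd1 : 1 < d by lia.
set Sx := ordS x.
have n1 : Sx != x := ordS_neq x hd1.
have n2 : ordS Sx != x by apply: (sh_neq (k:=2)); lia.
have n3 : x != ordS Sx by rewrite eq_sym.
have n4 : x != Sx by rewrite eq_sym.
set t : gword d := [:: (false, x); (false, x)].
set s : gword d := (false, Sx) :: Aw x.
have Ht_x u : eval_word t (x :: u) = x :: gen_act false Sx (gen_act false x u).
  by rewrite /t !ev_cons2 gF_i gF_Si.
have Ht_S u : eval_word t (Sx :: u) = Sx :: gen_act false x (gen_act false Sx u).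
  by rewrite /t !ev_cons2 gF_Si // gF_i.
have Ht_o y u : y != x -> y != Sx -> eval_word t (y :: u) = y :: u.
  by move=> h1 h2; rewrite /t !ev_cons2 !gF_o.
have Hs_x u : eval_word s (x :: u) = x :: gen_act false x u.
  by rewrite /s ev_cons2 gF_o // Aw_x.
have Hs_S u : eval_word s (Sx :: u) = Sx :: u.
  by rewrite /s ev_cons2 gF_i Aw_x2 // gTF.
have Hti_x u : eval_word (winv t) (x :: u) = x :: gen_act true x (gen_act true Sx u).
  by apply: (fix_inv (g := fun v => gen_act true x (gen_act true Sx v)) Ht_x) => v; rewrite !gFT.
have Hti_S u : eval_word (winv t) (Sx :: u) = Sx :: gen_act true Sx (gen_act true x u).
  by apply: (fix_inv (g := fun v => gen_act true Sx (gen_act true x v)) Ht_S) => v; rewrite !gFT.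
have Hti_o y u : y != x -> y != Sx -> eval_word (winv t) (y :: u) = y :: u.
  move=> h1 h2.
  by apply: (fix_inv (f := id) (g := id) (fun v => Ht_o y v h1 h2)).
have Hsi_x u : eval_word (winv s) (x :: u) = x :: gen_act true x u.
  by apply: (fix_inv (g := fun v => gen_act true x v) Hs_x) => v; rewrite !gFT.
have Hsi_S u : eval_word (winv s) (Sx :: u) = Sx :: u.
  by apply: (fix_inv (f := id) (g := id) Hs_S).
have Hsi_o y u : y != x -> y != Sx ->
    exists y' u', eval_word (winv s) (y :: u) = y' :: u' /\ y' != x /\ y' != Sx.
  move=> h1 h2; have [y' [u' E]] := ev_shape (winv s) y u.
  exists y', u'; split => //.
  have E2 := ev_winvK s (y :: u); rewrite E in E2.
  split; apply/eqP => ey; subst y'.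
    by move: E2; rewrite Hs_x => -[] e; rewrite e eqxx in h1.
  by move: E2; rewrite Hs_S => -[] e; rewrite e eqxx in h2.
exists [:: (t, s)].
have -> : commprod [:: (t, s)] = wcomm t s by rewrite /commprod /= cats0.
split => [u|y u hy]; rewrite /wcomm !ev_cat.
  by rewrite Hti_x Hsi_x Ht_x Hs_x gFT.
case: (eqVneq y Sx) => [->|hS].
  by rewrite Hti_S Hsi_S Ht_S Hs_S !gFT.
have [y' [u' [E [h1 h2]]]] := Hsi_o y u hy hS.
by rewrite Hti_o // E Ht_o // -E ev_winvK.
Qed.

Lemma ev_wcomm1 d b (i : 'I_d) c j u :
  eval_word (wcomm [:: (b, i)] [:: (c, j)]) u =
  gen_act c j (gen_act b i (gen_act (~~ c) j (gen_act (~~ b) i u))).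
Proof. by []. Qed.

Lemma gB_i d b (i : 'I_d) w : 1 < d ->
  gen_act b i (i :: w) = ordS i :: gen_act b (if b then ordS i else i) w.
Proof. by case: b => hd; rewrite ?gT_i ?gF_i. Qed.

Lemma gB_Si d b (i : 'I_d) w : 1 < d ->
  gen_act b i (ordS i :: w) = i :: gen_act b (if b then i else ordS i) w.
Proof. by case: b => hd; rewrite ?gT_Si ?gF_Si. Qed.

Lemma gB_o d b (i y : 'I_d) w : y != i -> y != ordS i ->
  gen_act b i (y :: w) = y :: w.
Proof. by case: b => h1 h2; rewrite ?gT_o ?gF_o. Qed.

Lemma gen_comm d (hd : 1 < d) b c (i j : 'I_d) u :
  i != j -> j != ordS i -> i != ordS j ->
  gen_act b i (gen_act c j u) = gen_act c j (gen_act b i u).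
Proof.
move=> hij hji hij'.
have hSS : ordS i != ordS j by apply: contra hij => /eqP/ordS_inj ->.
have hSij : ordS i != j by rewrite eq_sym.
have hSji : ordS j != i by rewrite eq_sym.
case: u => [|y w] //.
case: (eqVneq y i) => [->|y1].
  by rewrite (gB_o _ _ hij hij') gB_i // gB_o.
case: (eqVneq y (ordS i)) => [->|y2].
  by rewrite (gB_o _ _ hSij hSS) gB_Si // gB_o.
have hSS' : ordS j != ordS i by rewrite eq_sym.
have hji' : j != i by rewrite eq_sym.
case: (eqVneq y j) => [->|y3].
  by rewrite gB_i // (gB_o _ _ hSji hSS') (gB_o _ _ hji' hji) gB_i.
case: (eqVneq y (ordS j)) => [->|y4].
  by rewrite gB_Si // (gB_o _ _ hji' hji) (gB_o _ _ hSji hSS') gB_Si.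
by rewrite !gB_o.
Qed.

Lemma S_pos d (hd : 2 < d) (ho : odd d) (x i j : 'I_d) :
  Supp x (eval_word (wcomm [:: (false, i)] [:: (false, j)])).
Proof.
have hd1 : 1 < d by lia.
case: (eqVneq i j) => [->|hij].
  by apply: S_idf => u; rewrite ev_wcomm1 /= !gFT.
case: (eqVneq i (ordS j)) => [->|h1].
  exact: (S_trans hd ho x (core hd ho j)).
case: (eqVneq j (ordS i)) => [->|h2].
  apply: (S_inv (S_trans hd ho x (core hd ho i))) => u.
  exact: wcomm_inv.
apply: S_idf => u; rewrite ev_wcomm1 /=.
by rewrite (gen_comm hd1 false true _ hij h2 h1) !gFT.
Qed.

Lemma S_flip1 d (hd : 2 < d) (ho : odd d) (x i : 'I_d) (m : bool * 'I_d) :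
  Supp x (eval_word (wcomm [:: (false, i)] [:: m])) ->
  Supp x (eval_word (wcomm [:: (true, i)] [:: m])).
Proof.
case: m => c j H.
have H2 : Supp x (eval_word (wcomm [:: (c, j)] [:: (false, i)])).
  by apply: (S_inv H) => u; apply: wcomm_inv.
have H3 := S_conj hd ho [:: (true, i)] H2.
apply: (S_ext H3) => u.
have -> : winv [:: (true, i)] = [:: (false, i)] by [].
rewrite !ev1 !ev_wcomm1 /=.
by rewrite gTF.
Qed.

Lemma S_flip2 d (hd : 2 < d) (ho : odd d) (x j : 'I_d) (l : bool * 'I_d) :
  Supp x (eval_word (wcomm [:: l] [:: (false, j)])) ->
  Supp x (eval_word (wcomm [:: l] [:: (true, j)])).
Proof.
case: l => b i H.
have H2 : Supp x (eval_word (wcomm [:: (false, j)] [:: (b, i)])).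
  by apply: (S_inv H) => u; apply: wcomm_inv.
have H3 := S_conj hd ho [:: (true, j)] H2.
apply: (S_ext H3) => u.
have -> : winv [:: (true, j)] = [:: (false, j)] by [].
rewrite !ev1 !ev_wcomm1 /=.
by rewrite gTF.
Qed.

Lemma S_letters d (hd : 2 < d) (ho : odd d) (x : 'I_d) (l m : bool * 'I_d) :
  Supp x (eval_word (wcomm [:: l] [:: m])).
Proof.
case: l m => b i [c j].
have H1 : Supp x (eval_word (wcomm [:: (b, i)] [:: (false, j)])).
  case: b; last exact: S_pos.
  by apply: S_flip1 => //; apply: S_pos.
by case: c => //; apply: S_flip2.
Qed.

Lemma S_lB d (hd : 2 < d) (ho : odd d) (x : 'I_d) (l : bool * 'I_d) B :
  Supp x (eval_word (wcomm [:: l] B)).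
Proof.
case: l => b i.
elim: B => [|[c j] B IH].
  by apply: S_idf => u; rewrite /wcomm /= gen_invK.
have H := S_comp IH (S_conj hd ho B (S_letters hd ho x (b, i) (c, j))).
apply: (S_ext H) => u.
have w0 : winv [::] = [::] :> gword d by [].
rewrite /wcomm !winv_cons !ev_cat w0 !ev_nil ev_Kwinv ev_cons2 /=.
by rewrite gen_inv.
Qed.

Lemma S_AB d (hd : 2 < d) (ho : odd d) (x : 'I_d) (A B : gword d) :
  Supp x (eval_word (wcomm A B)).
Proof.
elim: A => [|l A IH].
  by apply: S_idf => u; rewrite /wcomm !ev_cat ev_nil ev_winvK.
have H := S_comp (S_conj hd ho A (S_lB hd ho x l B)) IH.
apply: (S_ext H) => u.
by rewrite /wcomm !winv_cons !ev_cat !ev_Kwinv.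
Qed.

Lemma S_cp d (hd : 2 < d) (ho : odd d) (x : 'I_d) cs :
  Supp x (eval_word (commprod cs)).
Proof.
elim: cs => [|p cs IH]; first exact: S_id.
have H := S_comp (S_AB hd ho x p.1 p.2) IH.
by apply: (S_ext H) => u; rewrite commprod_cons ev_cat.
Qed.

Lemma combine d (hd : 2 < d) (ho : odd d) (hs : 'I_d -> vertex d -> vertex d)
  (Hh : forall x, in_G' (hs x)) (s : seq 'I_d) : uniq s ->
  exists cs : seq (gword d * gword d), forall y u,
    eval_word (commprod cs) (y :: u) = if y \in s then y :: hs y u else y :: u.
Proof.
elim: s => [|x s IH] /=.
  by move=> _; exists [::] => y u.
move=> /andP [xs us]; have [cs2 H2] := IH us.
have [cs0 Hcs0] := Hh x.
have [cs1 [A1 B1]] : Supp x (hs x).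
  by apply: (S_ext (S_cp hd ho x cs0)) => u; rewrite Hcs0.
exists (cs1 ++ cs2) => y u; rewrite commprod_cat ev_cat in_cons.
case: (eqVneq y x) => [->|hy] /=.
  by rewrite A1 H2 (negbTE xs).
by rewrite B1 // H2.
Qed.

Theorem theorem4p8 (d : nat) (hd : 3 <= d) (hodd : odd d) :
  spherically_transitive_G d /\ G'_branching d.
Proof.
split; first exact: sph.
move=> hs Hh.
have [cs H] := combine hd hodd Hh (enum_uniq 'I_d).
exists (eval_word (commprod cs)); split; first by exists cs.
split.
  move=> x; rewrite H mem_enum /=.
  have [cs0 Hcs0] := Hh x.
  by rewrite Hcs0 ev_nilv.
move=> x v; rewrite /section H mem_enum /=.
by rewrite drop0.
Qed.
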